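(* Let $G,H$ be graded groups, $U\subset G$ open, $\Phi:U\to H$ a smooth map and $x\in U$. If $\Phi$ is Pansu differentiable at $x$, then $\Phi$ preserves the filtration at $x$.
   Context: A graded group is a connected, simply connected nilpotent real Lie group $G$ whose Lie algebra $\mathfrak g=\bigoplus_{j\ge1}\mathfrak g_j$ (finitely many nonzero) satisfies $[\mathfrak g_i,\mathfrak g_j]\subset\mathfrak g_{i+j}$; $\exp_G$ is a global diffeomorphism. Dilations: $\delta_rX=r^jX$ for $X\in\mathfrak g_j$, $r>0$, and $\delta_r(\exp_GX)=\exp_G(\delta_rX)$. $H$ is a graded group with Lie algebra $\mathfrak h=\bigoplus_j\mathfrak h_j$. For $x\in G$, $\tau^G_x=D_0L_x:\mathfrak g\to T_xG$ (differential of left translation at the identity), similarly $\tau^H$. For smooth $\Phi$, $\mathfrak d_x\Phi:=(\tau^H_{\Phi(x)})^{-1}\circ D_x\Phi\circ\tau^G_x:\mathfrak g\to\mathfrak h$; $\Phi$ preserves the filtration at $x$ if $\mathfrak d_x\Phi(\mathfrak g_j)\subset\mathfrak h_1\oplus\dots\oplus\mathfrak h_j$ for every $j$. $\Phi$ is Pansu differentiable at $x$ if for every $z\in G$ the limit $\lim_{\varepsilon\to0^+}\delta_{\varepsilon^{-1}}(\Phi(x)^{-1}\Phi(x\delta_\varepsilon z))$ exists. *)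

(* Defs.v *)
From HB Require Import structures.
From mathcomp Require Import all_boot all_order all_algebra.
From mathcomp Require Import all_classical all_reals all_analysis.
Set Implicit Arguments. Unset Strict Implicit. Unset Printing Implicit Defensive.
Import Order.TTheory GRing.Theory Num.Theory.
Import numFieldNormedType.Exports.
Local Open Scope classical_set_scope.
Local Open Scope ring_scope.

Fixpoint iderive {R : realType} {V W : normedModType R}
  (vs : seq V) (f : V -> W) : V -> W :=
  if vs is v :: vs' then (fun a => 'D_v (iderive vs' f) a) else f.

Definition smooth_on {R : realType} {V W : normedModType R}
  (U : set V) (f : V -> W) : Prop :=
  forall vs : seq V,
    (forall (v : V) (a : V), U a -> derivable (iderive vs f) a v) /\
    (forall a : V, U a -> {for a, continuous (iderive vs f)}).

(* Dilations in exponential coordinates adapted to the grading. *)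
Definition dil {R : realType} {n : nat} (deg : 'I_n -> nat) (r : R)
  (x : 'rV[R]_n) : 'rV[R]_n := \row_i (r ^+ deg i * x ord0 i).

Record graded_group (R : realType) := GradedGroup {
  gdim : nat;
  gdeg : 'I_gdim -> nat;
  gmul : 'rV[R]_gdim -> 'rV[R]_gdim -> 'rV[R]_gdim;
  gdeg_pos : forall i, (0 < gdeg i)%N;
  gmulA : forall x y z, gmul x (gmul y z) = gmul (gmul x y) z;
  gmul_oneparam : forall (x : 'rV[R]_gdim) (s t : R),
      gmul (s *: x) (t *: x) = (s + t) *: x;
  gmul_smooth : smooth_on setT
      (fun z : 'rV[R]_(gdim + gdim) => gmul (lsubmx z) (rsubmx z));
  gdil_morph : forall (r : R) x y, 0 < r ->
      dil gdeg r (gmul x y) = gmul (dil gdeg r x) (dil gdeg r y)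
}.

(* group inverse: in exponential coordinates x^{-1} = -x *)
Definition ginv {R : realType} (G : graded_group R) (x : 'rV[R]_(gdim G))
  : 'rV[R]_(gdim G) := - x.

Definition gdil {R : realType} (G : graded_group R) (r : R)
  (x : 'rV[R]_(gdim G)) : 'rV[R]_(gdim G) := dil (@gdeg R G) r x.

(* tau^G_x = D_0 L_x, as a matrix acting on row vectors *)
Definition tau_mx {R : realType} (G : graded_group R) (x : 'rV[R]_(gdim G))
  : 'M[R]_(gdim G) := lin1_mx ('d (fun y => gmul x y) 0).

(* frak d_x Phi = (tau^H_{Phi x})^{-1} o D_x Phi o tau^G_x, as a matrix *)
Definition dfrak_mx {R : realType} (G H : graded_group R)
  (Phi : 'rV[R]_(gdim G) -> 'rV[R]_(gdim H)) (x : 'rV[R]_(gdim G))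
  : 'M[R]_(gdim G, gdim H) :=
  tau_mx x *m lin1_mx ('d Phi x) *m invmx (tau_mx (Phi x)).

Definition dfrak {R : realType} (G H : graded_group R)
  (Phi : 'rV[R]_(gdim G) -> 'rV[R]_(gdim H)) (x : 'rV[R]_(gdim G))
  (X : 'rV[R]_(gdim G)) : 'rV[R]_(gdim H) := X *m dfrak_mx Phi x.

Definition in_layer {R : realType} (G : graded_group R) (j : nat)
  (X : 'rV[R]_(gdim G)) : Prop := forall i, gdeg i <> j -> X ord0 i = 0.

Definition in_filtr {R : realType} (H : graded_group R) (j : nat)
  (Y : 'rV[R]_(gdim H)) : Prop := forall k, (j < gdeg k)%N -> Y ord0 k = 0.

Definition preserves_filtration_at {R : realType} (G H : graded_group R)
  (Phi : 'rV[R]_(gdim G) -> 'rV[R]_(gdim H)) (x : 'rV[R]_(gdim G)) : Prop :=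
  forall (j : nat) (X : 'rV[R]_(gdim G)),
    @in_layer R G j X -> @in_filtr R H j (dfrak Phi x X).

Definition pansu_differentiable_at {R : realType} (G H : graded_group R)
  (Phi : 'rV[R]_(gdim G) -> 'rV[R]_(gdim H)) (x : 'rV[R]_(gdim G)) : Prop :=
  forall z : 'rV[R]_(gdim G), exists l : 'rV[R]_(gdim H),
    (fun e : R => @gdil R H e^-1
        (gmul (ginv (Phi x)) (Phi (gmul x (@gdil R G e z))))) @ 0^'+ --> l.

(* Main.v *)
Require Import Defs.
From HB Require Import structures.
From mathcomp Require Import all_boot all_order all_algebra.
From mathcomp Require Import all_classical all_reals all_analysis.
Set Implicit Arguments. Unset Strict Implicit. Unset Printing Implicit Defensive.
Import Order.TTheory GRing.Theory Num.Theory.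
Import numFieldNormedType.Exports.
Local Open Scope classical_set_scope.
Local Open Scope ring_scope.
From mathcomp Require Import lra.
Lemma mxnorm_entry (K : realFieldType) m n (M : 'M[K]_(m,n)) i j : `|M i j| <= `|M|.
Proof.
rewrite [leRHS]/Num.Def.normr /= mx_normrE.
by apply/bigmax_geP; right => /=; exists (i, j).
Qed.

Lemma mxnorm_le (K : realFieldType) m n (M : 'M[K]_(m,n)) c : 0 <= c ->
  (forall i j, `|M i j| <= c) -> `|M| <= c.
Proof.
move=> c0 H; rewrite [leLHS]/Num.Def.normr /= mx_normrE.
by apply: bigmax_le => // -[i j] _; apply: H.
Qed.

Lemma derivable_cont (R : realType) (g : R -> R) t : derivable g t 1 -> {for t, continuous g}.
Proof. by move=> /derivable1_diffP/differentiable_continuous. Qed.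

Lemma mvt_ineq (R : realType) (g : R -> R) a b M :
  (forall t, t \in `[Num.min a b, Num.max a b]%R -> derivable g t 1 /\ `|'D_1 g t| <= M) ->
  `|g b - g a| <= M * `|b - a|.
Proof.
wlog ab : a b / a <= b.
  move=> W H; case: (leP a b) => [ab|ba]; first exact: W.
  rewrite -normrN opprB -(normrN (b - a)) opprB; apply: W; first exact: ltW.
  by move=> t; rewrite minC maxC; apply: H.
move=> H; rewrite (min_l ab) (max_r ab) in H.
have [] := @MVT_segment R g (fun t => 'D_1 g t) a b ab.
- move=> t tab; have [dt _] := H t (subset_itv_oo_cc tab).
  by apply: DeriveDef.
- apply: continuous_in_subspaceT => t tab.
  by apply: derivable_cont; apply: (H t _).1; rewrite inE in tab.
- move=> c cab ->.
  rewrite normrM; apply: ler_wpM2r => //; exact: (H c cab).2.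
Qed.
Lemma line_derive (R : realType) (V W : normedModType R) (f : V -> W) p e t :
  derivable f (p + t *: e) e ->
  derivable (fun s : R => f (p + s *: e)) t 1 /\
  'D_1 (fun s : R => f (p + s *: e)) t = 'D_e f (p + t *: e).
Proof.
have E : (fun h : R => h^-1 *: (((fun s : R => f (p + s *: e)) \o shift t) (h *: 1)
             - f (p + t *: e))) =
         (fun h : R => h^-1 *: ((f \o shift (p + t *: e)) (h *: e) - f (p + t *: e))).
  apply: funext => h /=; congr (_ *: (f _ - _)).
  by rewrite [h%:A]mulr1 scalerDl addrCA addrA.
rewrite /derivable /derive E => d; split => //.
Qed.

Lemma coord_derive (R : realType) m (F : R -> 'rV[R]_m) t j :
  derivable F t 1 ->
  derivable (fun s => F s ord0 j) t 1 /\
  'D_1 (fun s => F s ord0 j) t = ('D_1 F t) ord0 j.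
Proof.
move=> d; split; first exact: (proj1 (derivable_mxP F t 1) d).
by rewrite derive_mx // mxE.
Qed.
Lemma itv_abs (R : realType) (s t : R) : t \in `[Num.min 0 s, Num.max 0 s]%R -> `|t| <= `|s|.
Proof.
rewrite in_itv /= => /andP[h1 h2].
case: (leP 0 s) => s0.
  rewrite (min_l s0) (max_r s0) in h1 h2.
  by rewrite !ger0_norm.
rewrite (min_r (ltW s0)) (max_l (ltW s0)) in h1 h2.
by rewrite (ltr0_norm s0) ler0_norm // lerN2.
Qed.

Lemma line_bound (R : realType) n m (f : 'rV[R]_n -> 'rV[R]_m) p e j c M s :
  (forall t, `|t| <= `|s| -> derivable f (p + t *: e) e /\
      `|('D_e f (p + t *: e)) ord0 j - c| <= M) ->
  `|f (p + s *: e) ord0 j - f p ord0 j - s * c| <= M * `|s|.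
Proof.
move=> H.
pose g := (fun t : R => f (p + t *: e) ord0 j) - c \*: (@id R).
have := @mvt_ineq R g 0 s M.
have -> : g s - g 0 = f (p + s *: e) ord0 j - f p ord0 j - s * c.
  change (f (p + s *: e) ord0 j - c * s - (f (p + 0 *: e) ord0 j - c * 0) =
     f (p + s *: e) ord0 j - f p ord0 j - s * c).
  rewrite scale0r addr0; lra.
rewrite subr0; apply => t /itv_abs ts.
have [dt Dt] := H t ts.
have [d1 D1] := line_derive dt.
have [d2 D2] := coord_derive j d1.
have id2 : is_derive t 1 (fun s : R => f (p + s *: e) ord0 j) ('D_e f (p + t *: e) ord0 j).
  by apply: DeriveDef; rewrite // D2 D1.
have ig : is_derive t 1 g ('D_e f (p + t *: e) ord0 j - c *: 1).
  by apply: is_deriveB.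
split; first by apply: ex_derive.
by rewrite derive_val /GRing.scale /= mulr1.
Qed.
Lemma C1_diff (R : realType) n m (f : 'rV[R]_n -> 'rV[R]_m) (U : set 'rV[R]_n) a :
  open U -> U a -> (forall v b, U b -> derivable f b v) ->
  (forall v, {for a, continuous (fun b => 'D_v f b)}) -> differentiable f a.
Proof.
move=> oU Ua dU cD.
pose e (i : 'I_n) : 'rV[R]_n := delta_mx ord0 i.
pose J : 'M[R]_(n, m) := \matrix_(i, j) ('D_(e i) f a) ord0 j.
pose L : {linear 'rV[R]_n -> 'rV[R]_m} := mulmxr J.
have Lx x : L x = x *m J by [].
have Lc : continuous L.
  apply/(linear_bounded_continuous L)/bounded_funP => r.
  exists (n%:R * (r * `|J|)) => x xr.
  have r0 : 0 <= r by apply: le_trans xr.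
  apply: mxnorm_le => [|i j]; first by rewrite mulr_ge0 // mulr_ge0.
  rewrite Lx mxE (le_trans (ler_norm_sum _ _ _)) //.
  apply: (@le_trans _ _ (\sum_(k < n) (r * `|J|))).
    apply: ler_sum => k _; rewrite normrM ler_pM // ?(le_trans _ xr) ?mxnorm_entry //.
  by rewrite sumr_const card_ord mulr_natl.
have Ho : f \o shift a = cst (f a) + (L : _ -> _) +o_ (0 : 'rV[R]_n) id.
  apply/eqaddoP => _/posnumP[eps].
  pose eps' := eps%:num / n.+1%:R.
  have ep : 0 < eps' by rewrite divr_gt0.
  have N1 : \forall b \near a, forall i, `|'D_(e i) f a - 'D_(e i) f b| <= eps'.
    near=> b => i; move: i; near: b; apply: filter_forall => i.
    exact: (cvgrPdist_le _ _).1 (cD (e i)) _ ep.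
  have N2 : \forall b \near a, U b by apply: open_nbhs_nbhs; split.
  have [d d0 Hd] := (nbhs_ballP _ _).1 (filterI N1 N2).
  apply/nbhs_ballP; exists d => // h; rewrite -ball_normE /= sub0r normrN => hd.
  change (`|f (h + a) - (f a + h *m J)| <= eps%:num * `|h|).
  pose q (k : nat) : 'rV[R]_n := a + \row_l (if (l < k)%N then h ord0 l else 0).
  have q0 : q 0%N = a.
    by rewrite /q (_ : \row_l _ = 0) ?addr0 //; apply/rowP => l; rewrite !mxE.
  have qn : q n = h + a.
    by rewrite /q addrC; congr (_ + _); apply/rowP => l; rewrite !mxE ltn_ord.
  have qS (k : 'I_n) : q k.+1 = q k + h ord0 k *: e k.
    rewrite /q -addrA; congr (_ + _); apply/rowP => l; rewrite !mxE ltnS leq_eqVlt.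
    case: (eqVneq l k) => [->|lk] /=; first by rewrite ltnn !eqxx mulr1 add0r.
    by move: lk => /negbTE; rewrite -val_eqE /= => ->; rewrite mulr0 addr0.
  have inball (k : 'I_n) t : `|t| <= `|h| -> ball a d (q k + t *: e k).
    move=> th; rewrite -ball_normE /= /q -addrA opprD addrA subrr sub0r normrN.
    apply: le_lt_trans hd; apply: mxnorm_le => // i0 l; rewrite !mxE (ord1 i0).
    case: (eqVneq l k) => [->|lk]; first by rewrite ltnn !eqxx mulr1 add0r.
    rewrite andbF mulr0 addr0; case: ifP => _; last by rewrite normr0.
    exact: mxnorm_entry.
  have -> : f (h + a) - (f a + h *m J) = \sum_(k < n) (f (q k.+1) - f (q k)) - h *m J.
    by rewrite -(big_mkord xpredT (fun k => f (q k.+1) - f (q k))) telescope_sumr // qn q0 opprD addrA.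
  apply: mxnorm_le => [|i0 j]; first by rewrite mulr_ge0.
  rewrite mxE summxE mxE mxE -sumrB (le_trans (ler_norm_sum _ _ _)) //.
  apply: (@le_trans _ _ (\sum_(k < n) (eps' * `|h|))).
    apply: ler_sum => k _.
    have -> : i0 = ord0 by rewrite (ord1 i0).
    rewrite qS !mxE.
    have hyp : forall t, `|t| <= `|h ord0 k| -> derivable f (q k + t *: e k) (e k) /\
        `|('D_(e k) f (q k + t *: e k)) ord0 j - 'D_(e k) f a ord0 j| <= eps'.
      move=> t th.
      have th' : `|t| <= `|h| := le_trans th (mxnorm_entry h ord0 k).
      have [H1 H2] := Hd _ (inball k t th').
      split; first exact: dU.
      rewrite distrC.
      have := mxnorm_entry ('D_(e k) f a - 'D_(e k) f (q k + t *: e k)) ord0 j.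
      by rewrite !mxE => /le_trans; apply; exact: H1.
    apply: le_trans (line_bound hyp) _.
    by apply: ler_wpM2l; [exact: ltW | exact: mxnorm_entry].
  rewrite sumr_const card_ord -mulr_natl mulrA ler_wpM2r //.
  rewrite /eps' mulrCA ler_piMr // ler_pdivrMr ?ltr0n // mul1r ler_nat //.
apply/diff_locallyP; rewrite (diff_unique Lc Ho); split => //.
Unshelve. all: by end_near. Qed.
Lemma smooth_diff (R : realType) n m (f : 'rV[R]_n -> 'rV[R]_m) (U : set 'rV[R]_n) a :
  open U -> U a -> smooth_on U f -> differentiable f a.
Proof.
move=> oU Ua S; apply: (C1_diff oU Ua).
- by move=> v b Ub; exact: (S [::]).1.
- by move=> v; exact: (S [:: v]).2 a Ua.
Qed.

Lemma mulmxr_cont (R : realType) n m (J : 'M[R]_(n,m)) :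
  continuous (mulmxr J : {linear 'rV[R]_n -> 'rV[R]_m}).
Proof.
pose L : {linear 'rV[R]_n -> 'rV[R]_m} := mulmxr J.
have Lx x : L x = x *m J by [].
apply/(linear_bounded_continuous L)/bounded_funP => r.
exists (n%:R * (r * `|J|)) => x xr.
have r0 : 0 <= r by apply: le_trans xr.
apply: mxnorm_le => [|i j]; first by rewrite mulr_ge0 // mulr_ge0.
rewrite Lx mxE (le_trans (ler_norm_sum _ _ _)) //.
apply: (@le_trans _ _ (\sum_(k < n) (r * `|J|))).
  apply: ler_sum => k _; rewrite normrM ler_pM // ?(le_trans _ xr) ?mxnorm_entry //.
by rewrite sumr_const card_ord mulr_natl.
Qed.

Section GG.
Variables (R : realType) (G : graded_group R).
Local Notation gm := (@gmul R G).

Lemma gmul0l y : gm 0 y = y.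
Proof. by have := gmul_oneparam y 0 1; rewrite scale0r scale1r add0r scale1r. Qed.

Lemma gmul0r y : gm y 0 = y.
Proof. by have := gmul_oneparam y 1 0; rewrite scale0r scale1r addr0 scale1r. Qed.

Lemma gmulNl y : gm (- y) y = 0.
Proof. by have := gmul_oneparam y (-1) 1; rewrite scaleN1r scale1r addNr scale0r. Qed.

Lemma gmulK a y : gm (- a) (gm a y) = y.
Proof. by rewrite gmulA gmulNl gmul0l. Qed.

Lemma diff_gmul x y : differentiable (gm x) y.
Proof.
pose g2 := fun z : 'rV[R]_(gdim G + gdim G) => gm (lsubmx z) (rsubmx z).
have dg2 z : differentiable g2 z.
  by apply: (smooth_diff openT _ (@gmul_smooth R G)).
pose M : 'M[R]_(gdim G, gdim G + gdim G) := row_mx 0 1%:M.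
have E : gm x = g2 \o (fun y => row_mx x 0 + y *m M).
  apply: funext => z /=; rewrite /g2 /M mul_mx_row mulmx0 mulmx1 add_row_mx.
  by rewrite addr0 add0r row_mxKl row_mxKr.
rewrite E; apply: differentiable_comp => //.
apply: differentiableD; first exact: differentiable_cst.
pose L : {linear 'rV[R]_(gdim G) -> 'rV[R]_(gdim G + gdim G)} := mulmxr M.
have -> : (fun y => y *m M) = L by [].
apply: linear_differentiable.
exact: mulmxr_cont.
Qed.
End GG.
Lemma pow_dnbhs (R : realType) n : (fun e : R => e ^+ n.+1) @ 0^'+ --> (0:R)^'.
Proof.
move=> P /nbhs_ballP [d /= d0 Hd].
apply/nbhs_ballP; exists (Num.min d 1) => [|e]; first by rewrite /= lt_min d0 ltr01.
rewrite -ball_normE /= sub0r normrN lt_min => /andP[ed e1] e0.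
rewrite ger0_norm ?ltW // in ed e1.
have en : e ^+ n.+1 <= e.
  by rewrite exprS; apply: ler_piMr; [exact: ltW | exact: exprn_ile1 (ltW e0) (ltW e1)].
apply: Hd; last by rewrite gt_eqF // exprn_gt0.
rewrite -ball_normE /= sub0r normrN ger0_norm ?exprn_ge0 ?ltW //.
exact: le_lt_trans en ed.
Qed.

Unset Implicit Arguments.

Theorem lemma2p5 (R : realType) (G H : graded_group R)
  (U : set 'rV[R]_(gdim G)) (Phi : 'rV[R]_(gdim G) -> 'rV[R]_(gdim H))
  (x : 'rV[R]_(gdim G)) :
  open U -> U x -> smooth_on U Phi ->
  pansu_differentiable_at Phi x -> preserves_filtration_at Phi x.
Proof.
move=> oU Ux sPhi PD j X HX k jk.
case: j jk HX => [|j] jk HX.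
  have -> : X = 0.
    apply/rowP => i; rewrite mxE; apply: HX => e0.
    by have := gdeg_pos i; rewrite e0.
  by rewrite /dfrak mul0mx mxE.
set a := Phi x.
have dPhi : differentiable Phi x := smooth_diff oU Ux sPhi.
pose psi := fun y => @gmul R H (- a) (Phi (@gmul R G x y)).
have psi0 : psi 0 = 0 by rewrite /psi gmul0r gmulNl.
have dpsi : differentiable psi 0.
  have -> : psi = (@gmul R H (- a)) \o (Phi \o @gmul R G x) by [].
  apply: differentiable_comp; last exact: diff_gmul.
  apply: differentiable_comp; first exact: diff_gmul.
  by rewrite gmul0r.
have key v : 'd (@gmul R H (- a)) a ('d (@gmul R H a) 0 v) = v.
  have E : @gmul R H (- a) \o @gmul R H a = id := funext (gmulK a).
  move: (diff_comp (diff_gmul a 0) (diff_gmul (- a) (@gmul R H a 0))).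
  rewrite E gmul0r => /(congr1 (fun F => F v)) /= <-.
  by rewrite diff_val.
have T1 : tau_mx a *m lin1_mx ('d (@gmul R H (- a)) a) = 1%:M.
  by apply/row_matrixP => i; rewrite !rowE mulmxA /tau_mx !mul_rV_lin1 /= key mulmx1.
have inv : invmx (tau_mx a) = lin1_mx ('d (@gmul R H (- a)) a).
  have [u _] := mulmx1_unit T1.
  by rewrite -[invmx _]mulmx1 -T1 mulmxA mulVmx // mul1mx.
have dfr : dfrak Phi x X = 'D_X psi 0.
  rewrite /dfrak /dfrak_mx -/a inv !mulmxA /tau_mx !mul_rV_lin1 (deriveE _ dpsi).
  have dP' : differentiable Phi (@gmul R G x 0) by rewrite gmul0r.
  have E1 := diff_comp (diff_gmul x 0) dP'.
  have dPx : differentiable (Phi \o @gmul R G x) 0 := differentiable_comp (diff_gmul x 0) dP'.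
  have E2 := diff_comp dPx (diff_gmul (-a) ((Phi \o @gmul R G x) 0)).
  have E2X := congr1 (fun F => F X) E2.
  have E1X := congr1 (fun F => F X) E1.
  simpl in E1X, E2X.
  rewrite gmul0r in E1X E2X.
  symmetry. apply: etrans E2X _.
  apply: etrans (congr1 ('d (@gmul R H (-a)) (Phi x)) E1X) _.
  reflexivity.
rewrite dfr.
have Xd e : gdil e X = e ^+ j.+1 *: X.
  apply/rowP => i; rewrite !mxE; case: (eqVneq (gdeg i) j.+1) => [->|ne] //.
  by rewrite HX ?mulr0 //; apply/eqP.
have [l Hl] := PD X.
have Hl' : (fun e : R => (e^-1)^+(gdeg k) * psi (e ^+ j.+1 *: X) ord0 k) @ 0^'+ --> l ord0 k.
  have := @cvg_comp _ _ _ _ (fun M : 'rV[R]_(gdim H) => M ord0 k) _ _ _ Hl (@coord_continuous _ _ _ ord0 k l).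
  have EF : (fun M : 'rV[R]_(gdim H) => M ord0 k) \o (fun e => gdil e^-1 (gmul (ginv (Phi x)) (Phi (gmul x (gdil e X))))) = (fun e : R => (e^-1)^+(gdeg k) * psi (e ^+ j.+1 *: X) ord0 k).
    by apply: funext => e; rewrite /= Xd /gdil /dil mxE.
  by rewrite EF.
have [D' HD] : exists D' : 'rV[R]_(gdim H), (fun h : R => h^-1 *: ((psi \o shift 0) (h *: X) - psi 0)) @ 0^' --> D'.
  by apply/cvg_ex; exact: diff_derivable dpsi.
have DD : 'D_X psi 0 = D' by apply: cvg_lim HD.
rewrite DD.
have HDk : (fun h : R => h^-1 * psi (h *: X) ord0 k) @ 0^' --> D' ord0 k.
  have := @cvg_comp _ _ _ _ (fun M : 'rV[R]_(gdim H) => M ord0 k) _ _ _ HD (@coord_continuous _ _ _ ord0 k D').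
  have EF2 : (fun M : 'rV[R]_(gdim H) => M ord0 k) \o (fun h : R => h^-1 *: ((psi \o shift 0) (h *: X) - psi 0)) = (fun h : R => h^-1 * psi (h *: X) ord0 k).
    by apply: funext => h /=; rewrite psi0 subr0 addr0 mxE.
  by rewrite EF2.
have HA := @cvg_comp _ _ _ (fun e : R => e ^+ j.+1) _ _ _ _ (@pow_dnbhs R j) HDk.
have HB : (fun e : R => e ^+ (gdeg k - j.+1) * ((e^-1)^+(gdeg k) * psi (e ^+ j.+1 *: X) ord0 k)) @ 0^'+ --> 0 * l ord0 k.
  apply: cvgM; last exact: Hl'.
  apply: cvg_at_right_filter.
  have := @exprn_continuous R (gdeg k - j.+1) 0.
  rewrite /continuous_at /= expr0n subn_eq0 leqNgt jk /= mulr0n; exact.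
have EQ : {near 0^'+, ((fun h : R => h^-1 * psi (h *: X) ord0 k) \o (fun e : R => e ^+ j.+1)) =1
   (fun e : R => e ^+ (gdeg k - j.+1) * ((e^-1)^+(gdeg k) * psi (e ^+ j.+1 *: X) ord0 k))}.
  near=> e.
  have e0 : 0 < e by near: e; exact: nbhs_right_gt.
  rewrite /= mulrA; congr (_ * _).
  rewrite exprVn -{2}(subnK (ltnW jk)) exprD invfM mulrA mulfV ?mul1r //.
  by rewrite expf_neq0 // gt_eqF.
have HF2 : (fun e : R => e ^+ (gdeg k - j.+1) * ((e^-1)^+(gdeg k) * psi (e ^+ j.+1 *: X) ord0 k)) @ 0^'+ --> D' ord0 k.
  exact: cvg_trans (near_eq_cvg EQ) HA.
have := cvg_unique (@norm_hausdorff R R^o) HF2 HB.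
move=> /(_ _) -> //; last by rewrite mul0r.
Unshelve. all: by end_near.
Qed.
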